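(* Let $\vec a=(a_1,\dots,a_n)\in\mathbb R^n_{>0}$, $\Sigma=\partial E(\vec a)$ and $Z=Z_{\vec a}:=2\pi\sum_{j=1}^n\frac1{a_j}(x_j\partial_{x_j}+y_j\partial_{y_j})$. Let $\alpha=\lambda_{std}|_\Sigma$ and let $\beta$ be the one-form on $\Sigma$ with $\ker\beta=T\Sigma\cap iT\Sigma$ and $\beta(iZ)=1$. Then there is a diffeomorphism $G:\partial E(\vec a)\to\partial E(\vec a)$ such that $G^*\alpha=\beta$.
   Context: $E(\vec a)=\{z\in\mathbb C^n:\pi\sum_j|z_j|^2/a_j\le1\}$, $z_j=x_j+iy_j$, $\lambda_{std}=\frac12\sum_j(x_jdy_j-y_jdx_j)$, and $i$ is the standard complex structure. *)

(* Defs.v *)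
From HB Require Import structures.
From mathcomp Require Import all_boot all_order all_algebra.
From mathcomp Require Import all_classical all_reals all_analysis.
Set Implicit Arguments. Unset Strict Implicit. Unset Printing Implicit Defensive.
Import Order.TTheory GRing.Theory Num.Theory.
Import numFieldNormedType.Exports.
Local Open Scope classical_set_scope.
Local Open Scope ring_scope.

(* C^n is modelled as R^n x R^n : z = (x, y),
   with z_j = x_j + i y_j, x_j = (z.1) 0 j, y_j = (z.2) 0 j. *)
Definition Cn (R : realType) (n : nat) := ('rV[R]_n * 'rV[R]_n)%type.

Section Defs.
Variables (R : realType) (n : nat).

Definition xc (p : Cn R n) (j : 'I_n) : R := p.1 0 j.
Definition yc (p : Cn R n) (j : 'I_n) : R := p.2 0 j.

Definition ellQ (a : 'I_n -> R) (p : Cn R n) : R :=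
  pi * \sum_(j < n) (xc p j ^+ 2 + yc p j ^+ 2) / a j.

Definition ellipsoid (a : 'I_n -> R) : set (Cn R n) := [set p | ellQ a p <= 1].

Definition ellBoundary (a : 'I_n -> R) : set (Cn R n) := [set p | ellQ a p = 1].

Definition tangentSigma (a : 'I_n -> R) (p v : Cn R n) : Prop :=
  derive (ellQ a) p v = 0.

Definition Jstd (v : Cn R n) : Cn R n := (- v.2, v.1).

Definition Zfield (a : 'I_n -> R) (p : Cn R n) : Cn R n :=
  (\row_j (2 * pi / a j * xc p j), \row_j (2 * pi / a j * yc p j)).

Definition lambda_std (p v : Cn R n) : R :=
  2^-1 * \sum_(j < n) (xc p j * yc v j - yc p j * xc v j).

Fixpoint Ck (k : nat) (f : Cn R n -> Cn R n) : Prop :=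
  match k with
  | 0 => continuous f
  | k.+1 => (forall x v, derivable f x v) /\ forall v, Ck k (fun x => derive f x v)
  end.

Definition smooth (f : Cn R n -> Cn R n) : Prop := forall k, Ck k f.

(* G (restricted to S) is a diffeomorphism S -> S, where S is a closed embedded
   submanifold: G and its inverse are restrictions of smooth maps of R^{2n}. *)
Definition diffeo_on (S : set (Cn R n)) (G : Cn R n -> Cn R n) : Prop :=
  smooth G /\ (forall p, S p -> S (G p)) /\
  exists H : Cn R n -> Cn R n, smooth H /\ (forall p, S p -> S (H p)) /\
    (forall p, S p -> H (G p) = p) /\ (forall p, S p -> G (H p) = p).

End Defs.

(* Main.v *)
Require Import Defs.
From HB Require Import structures.
From mathcomp Require Import all_boot all_order all_algebra.
From mathcomp Require Import all_classical all_reals all_analysis.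
From mathcomp Require Import ring.
Import Order.TTheory GRing.Theory Num.Theory.
Import numFieldNormedType.Exports.
Local Open Scope classical_set_scope.
Local Open Scope ring_scope.
Section S.
Variables (R : realType) (n : nat).
Implicit Types (f g : Cn R n -> R).
Lemma xc_lin j : linear (fun p : Cn R n => xc p j).
Proof. by move=> c u v; rewrite /xc /= !mxE. Qed.
Lemma yc_lin j : linear (fun p : Cn R n => yc p j).
Proof. by move=> c u v; rewrite /yc /= !mxE. Qed.
Lemma xc_cont j : continuous (fun p : Cn R n => xc p j).
Proof. move=> p; apply: (@continuous_comp _ _ _ fst (fun N : 'rV[R]_n => N 0 j)).
  exact: cvg_fst. exact: coord_continuous. Qed.
Lemma yc_cont j : continuous (fun p : Cn R n => yc p j).
Proof. move=> p; apply: (@continuous_comp _ _ _ snd (fun N : 'rV[R]_n => N 0 j)).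
  exact: cvg_snd. exact: coord_continuous. Qed.
Lemma xc_diff j x : differentiable (fun p : Cn R n => xc p j) x /\
   'd (fun p : Cn R n => xc p j) x = (fun p => xc p j) :> (_ -> _).
Proof.
pose M := GRing.isLinear.Build _ _ _ _ _ (xc_lin j).
pose L : {linear Cn R n -> R} := HB.pack (fun p : Cn R n => xc p j) M.
have -> : (fun p : Cn R n => xc p j) = L by [].
split; first exact/linear_differentiable/xc_cont.
by rewrite diff_lin //; apply: xc_cont.
Qed.
Lemma yc_diff j x : differentiable (fun p : Cn R n => yc p j) x /\
   'd (fun p : Cn R n => yc p j) x = (fun p => yc p j) :> (_ -> _).
Proof.
pose M := GRing.isLinear.Build _ _ _ _ _ (yc_lin j).
pose L : {linear Cn R n -> R} := HB.pack (fun p : Cn R n => yc p j) M.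
have -> : (fun p : Cn R n => yc p j) = L by [].
split; first exact/linear_differentiable/yc_cont.
by rewrite diff_lin //; apply: yc_cont.
Qed.

Inductive sgood : (Cn R n -> R) -> Prop :=
| sg_cst c : sgood (fun _ => c)
| sg_x j : sgood (fun p => xc p j)
| sg_y j : sgood (fun p => yc p j)
| sg_add f g : sgood f -> sgood g -> sgood (fun p => f p + g p)
| sg_mul f g : sgood f -> sgood g -> sgood (fun p => f p * g p)
| sg_sum m (F : 'I_m -> Cn R n -> R) : (forall i, sgood (F i)) ->
     sgood (fun p => \sum_(i < m) F i p)
| sg_isq f : sgood f -> (forall p, 0 < f p) -> sgood (fun p => (Num.sqrt (f p))^-1).

Lemma sqrt_diff f x : differentiable f x -> 0 < f x ->
  differentiable (fun p => Num.sqrt (f p)) x.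
Proof.
move=> df fx; apply: (@differentiable_comp _ _ _ _ f Num.sqrt) => //.
apply/derivable1_diffP.
have H := is_derive1_sqrt fx.
exact: ex_derive.
Qed.

Lemma sgood_prop f : sgood f ->
  (forall x, differentiable f x) /\ forall v, sgood (fun x => 'D_v f x).
Proof.
elim=> {f}.
- move=> c; split=> [x|v]; first exact: differentiable_cst.
  have -> : (fun x => 'D_v (fun _ : Cn R n => c) x) = fun _ => 0.
    by apply/funext => x; exact: derive_cst.
  exact: sg_cst.
- move=> j; split=> [x|v]; first by case: (xc_diff j x).
  have -> : (fun x => 'D_v (fun p : Cn R n => xc p j) x) = fun _ => xc v j.
    apply/funext => x; case: (xc_diff j x) => d e; by rewrite deriveE // e.
  exact: sg_cst.
- move=> j; split=> [x|v]; first by case: (yc_diff j x).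
  have -> : (fun x => 'D_v (fun p : Cn R n => yc p j) x) = fun _ => yc v j.
    apply/funext => x; case: (yc_diff j x) => d e; by rewrite deriveE // e.
  exact: sg_cst.
- move=> f g _ [df Df] _ [dg Dg]; split=> [x|v].
    exact: (differentiableD (df x) (dg x)).
  have -> : (fun x => 'D_v (fun p => f p + g p) x) = fun x => 'D_v f x + 'D_v g x.
    apply/funext => x; rewrite -deriveD //; exact: diff_derivable.
  exact: sg_add.
- move=> f g sf [df Df] sg [dg Dg]; split=> [x|v].
    exact: (differentiableM (df x) (dg x)).
  have -> : (fun x => 'D_v (fun p => f p * g p) x) =
     fun x => f x * 'D_v g x + g x * 'D_v f x.
    apply/funext => x; rewrite -deriveM //; exact: diff_derivable.
  by apply: sg_add; apply: sg_mul.
- move=> m F _ IH; split=> [x|v].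
    have -> : (fun p => \sum_(i < m) F i p) = \sum_(i < m) F i.
      by apply/funext => p; rewrite fct_sumE.
    apply: differentiable_sum => i; exact: (IH i).1.
  have -> : (fun x => 'D_v (fun p => \sum_(i < m) F i p) x) =
     fun x => \sum_(i < m) 'D_v (F i) x.
    apply/funext => x.
    have -> : (fun p => \sum_(i < m) F i p) = \sum_(i < m) F i.
      by apply/funext => p; rewrite fct_sumE.
    rewrite derive_sum // => i; apply: diff_derivable; exact: (IH i).1.
  by apply: sg_sum => i; exact: (IH i).2.
- move=> f sf [df Df] fpos.
  have ds x : differentiable (fun p => Num.sqrt (f p)) x by apply: sqrt_diff.
  have sne x : Num.sqrt (f x) != 0 by rewrite gt_eqF // sqrtr_gt0.
  split=> [x|v]; first exact: differentiableV.
  have Ds x : 'D_v (fun p => Num.sqrt (f p)) x = 'D_v f x / (2 * Num.sqrt (f x)).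
    have h : 'D_v (fun p => Num.sqrt (f p) * Num.sqrt (f p)) x = 'D_v f x.
      have -> : (fun p => Num.sqrt (f p) * Num.sqrt (f p)) = f.
        by apply/funext => p; rewrite -expr2 sqr_sqrtr // ltW.
      by [].
    have e : 'D_v f x = 2 * Num.sqrt (f x) * 'D_v (fun p => Num.sqrt (f p)) x.
      rewrite -h.
      have -> : (fun p => Num.sqrt (f p) * Num.sqrt (f p)) =
         ((fun p => Num.sqrt (f p)) * (fun p => Num.sqrt (f p)))%R by [].
      rewrite deriveM; try exact: diff_derivable.
      change (Num.sqrt (f x) * 'D_v (fun p => Num.sqrt (f p)) x + Num.sqrt (f x) * 'D_v (fun p => Num.sqrt (f p)) x = 2 * Num.sqrt (f x) * 'D_v (fun p => Num.sqrt (f p)) x).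
      by rewrite -mulrA mulr2n mulrDl mul1r.
    by rewrite e [_ * _ * _]mulrC mulfK // mulf_neq0 // pnatr_eq0.
  have -> : (fun x => 'D_v (fun p => (Num.sqrt (f p))^-1) x) =
     fun x => (- 2^-1) * ((Num.sqrt (f x))^-1 * ((Num.sqrt (f x))^-1 * (Num.sqrt (f x))^-1)) * 'D_v f x.
    apply/funext => x; rewrite deriveV //; last exact: diff_derivable.
    rewrite Ds.
    change (- (Num.sqrt (f x) ^+ 2)^-1 * ('D_v f x / (2 * Num.sqrt (f x))) = - 2^-1 * ((Num.sqrt (f x))^-1 * ((Num.sqrt (f x))^-1 * (Num.sqrt (f x))^-1)) * 'D_v f x).
    have := sne x; move: (Num.sqrt (f x)) ('D_v f x) => s d sn.
    rewrite expr2; field; rewrite ?sn ?andbT //.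
  have sr : sgood (fun p => (Num.sqrt (f p))^-1) by exact: sg_isq.
  apply: (sg_mul _ _ _ (Df v)).
  apply: (sg_mul _ _ (sg_cst _)).
  exact: (sg_mul _ _ sr (sg_mul _ _ sr sr)).
Qed.

Implicit Types (F H : Cn R n -> Cn R n).
Inductive vgood : (Cn R n -> Cn R n) -> Prop :=
| vg_scal f c : sgood f -> vgood (fun x => f x *: c)
| vg_add F H : vgood F -> vgood H -> vgood (fun x => F x + H x)
| vg_sum m (Fs : 'I_m -> Cn R n -> Cn R n) : (forall i, vgood (Fs i)) ->
     vgood (fun p => \sum_(i < m) Fs i p).

Lemma vgood_prop F : vgood F ->
  (forall x, differentiable F x) /\ forall v, vgood (fun x => 'D_v F x).
Proof.
elim=> {F}.
- move=> f c /[dup] sf /sgood_prop [df Df]; split=> [x|v].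
    exact: differentiableZl.
  have -> : (fun x => 'D_v (fun y => f y *: c) x) = fun x => 'D_v f x *: c.
    apply/funext => x; rewrite deriveE; last exact: differentiableZl.
    by rewrite diffZl // deriveE.
  exact: vg_scal.
- move=> F H sF [dF DF] sH [dH DH]; split=> [x|v].
    exact: (differentiableD (dF x) (dH x)).
  have -> : (fun x => 'D_v (fun p => F p + H p) x) = fun x => 'D_v F x + 'D_v H x.
    apply/funext => x; rewrite -deriveD //; exact: diff_derivable.
  exact: vg_add.
- move=> m Fs _ IH; split=> [x|v].
    have -> : (fun p => \sum_(i < m) Fs i p) = \sum_(i < m) Fs i.
      by apply/funext => p; rewrite fct_sumE.
    apply: differentiable_sum => i; exact: (IH i).1.
  have -> : (fun x => 'D_v (fun p => \sum_(i < m) Fs i p) x) =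
     fun x => \sum_(i < m) 'D_v (Fs i) x.
    apply/funext => x.
    have -> : (fun p => \sum_(i < m) Fs i p) = \sum_(i < m) Fs i.
      by apply/funext => p; rewrite fct_sumE.
    rewrite derive_sum // => i; apply: diff_derivable; exact: (IH i).1.
  by apply: vg_sum => i; exact: (IH i).2.
Qed.

Arguments sgood_prop [f]. Arguments vgood_prop [F].
Lemma vgood_smooth F : vgood F -> smooth F.
Proof.
move=> vF k; elim: k F vF => [|k IH] F vF /=.
  move=> x; exact: (differentiable_continuous ((vgood_prop vF).1 x)).
split.
  move=> x v; exact: (diff_derivable ((vgood_prop vF).1 x)).
move=> v; apply: IH; exact: (vgood_prop vF).2.
Qed.

Lemma xc_sum m (Fs : 'I_m -> Cn R n) j : xc (\sum_(i < m) Fs i) j = \sum_(i < m) xc (Fs i) j.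
Proof.
apply: (big_morph (fun p : Cn R n => xc p j)).
  by move=> u v; rewrite /xc /= mxE.
by rewrite /xc /= mxE.
Qed.
Lemma yc_sum m (Fs : 'I_m -> Cn R n) j : yc (\sum_(i < m) Fs i) j = \sum_(i < m) yc (Fs i) j.
Proof.
apply: (big_morph (fun p : Cn R n => yc p j)).
  by move=> u v; rewrite /yc /= mxE.
by rewrite /yc /= mxE.
Qed.

Lemma D_xc F x v j : differentiable F x ->
  xc ('D_v F x) j = 'D_v (fun p => xc (F p) j) x.
Proof.
move=> dF.
have dc := xc_diff j (F x).
have dcomp : differentiable ((fun q : Cn R n => xc q j) \o F) x.
  by apply: differentiable_comp => //; case: dc.
rewrite (deriveE _ dcomp) diff_comp //; last by case: dc.
by rewrite /= (proj2 dc) deriveE.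
Qed.
Lemma D_yc F x v j : differentiable F x ->
  yc ('D_v F x) j = 'D_v (fun p => yc (F p) j) x.
Proof.
move=> dF.
have dc := yc_diff j (F x).
have dcomp : differentiable ((fun q : Cn R n => yc q j) \o F) x.
  by apply: differentiable_comp => //; case: dc.
rewrite (deriveE _ dcomp) diff_comp //; last by case: dc.
by rewrite /= (proj2 dc) deriveE.
Qed.

Lemma D_x j x v : 'D_v (fun p : Cn R n => xc p j) x = xc v j.
Proof. by case: (xc_diff j x) => d e; rewrite deriveE // e. Qed.
Lemma D_y j x v : 'D_v (fun p : Cn R n => yc p j) x = yc v j.
Proof. by case: (yc_diff j x) => d e; rewrite deriveE // e. Qed.
Definition ex (j : 'I_n) : Cn R n := (\row_k ((k == j)%:R), 0).
Definition ey (j : 'I_n) : Cn R n := (0, \row_k ((k == j)%:R)).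
Definition Scl (s : 'I_n -> Cn R n -> R) (x : Cn R n) : Cn R n :=
  \sum_(j < n) ((xc x j * s j x) *: ex j + (yc x j * s j x) *: ey j).

Lemma Scl_xc s x k : xc (Scl s x) k = xc x k * s k x.
Proof.
rewrite /Scl xc_sum (bigD1 k) //= big1 ?addr0.
  by rewrite /xc /= !mxE eqxx mulr1 mulr0 addr0.
by move=> j /negbTE jk; rewrite /xc /= !mxE eq_sym jk !mulr0 addr0.
Qed.
Lemma Scl_yc s x k : yc (Scl s x) k = yc x k * s k x.
Proof.
rewrite /Scl yc_sum (bigD1 k) //= big1 ?addr0.
  by rewrite /yc /= !mxE eqxx mulr1 mulr0 add0r.
by move=> j /negbTE jk; rewrite /yc /= !mxE eq_sym jk !mulr0 addr0.
Qed.

Lemma Scl_vgood s : (forall j, sgood (s j)) -> vgood (Scl s).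
Proof.
move=> sg; apply: vg_sum => j; apply: vg_add; apply: vg_scal; apply: sg_mul => //.
  exact: sg_x. exact: sg_y.
Qed.

Arguments Scl_vgood [s].
Lemma Scl_dxc s x v k : (forall j, sgood (s j)) ->
  xc ('D_v (Scl s) x) k = xc x k * 'D_v (s k) x + s k x * xc v k.
Proof.
move=> sg; rewrite D_xc; last exact: (vgood_prop (Scl_vgood sg)).1.
have -> : (fun p => xc (Scl s p) k) = ((fun p => xc p k) * s k)%R.
  by apply/funext => p; rewrite Scl_xc.
rewrite deriveM; first last.
- exact/diff_derivable/((sgood_prop (sg k)).1).
- exact/diff_derivable/((xc_diff k x).1).
by rewrite D_x.
Qed.
Lemma Scl_dyc s x v k : (forall j, sgood (s j)) ->
  yc ('D_v (Scl s) x) k = yc x k * 'D_v (s k) x + s k x * yc v k.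
Proof.
move=> sg; rewrite D_yc; last exact: (vgood_prop (Scl_vgood sg)).1.
have -> : (fun p => yc (Scl s p) k) = ((fun p => yc p k) * s k)%R.
  by apply/funext => p; rewrite Scl_yc.
rewrite deriveM; first last.
- exact/diff_derivable/((sgood_prop (sg k)).1).
- exact/diff_derivable/((yc_diff k x).1).
by rewrite D_y.
Qed.

Lemma Scl_lambda s x v : (forall j, sgood (s j)) ->
  lambda_std (Scl s x) ('D_v (Scl s) x) =
  2^-1 * \sum_(j < n) s j x ^+ 2 * (xc x j * yc v j - yc x j * xc v j).
Proof.
move=> sg; rewrite /lambda_std; congr (_ * _); apply: eq_bigr => j _.
rewrite !Scl_xc !Scl_yc Scl_dxc // Scl_dyc //.
change (xc x j * s j x * (yc x j * 'D_v (s j) x + s j x * yc v j) -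
  yc x j * s j x * (xc x j * 'D_v (s j) x + s j x * xc v j) =
  s j x ^+ 2 * (xc x j * yc v j - yc x j * xc v j)).
ring.
Qed.

Lemma sg_diff f : sgood f -> forall x v, derivable f x v.
Proof. by move=> sf x v; apply: diff_derivable; exact: (sgood_prop sf).1. Qed.

Lemma D_add f g x v : sgood f -> sgood g ->
  'D_v (fun p => f p + g p) x = 'D_v f x + 'D_v g x.
Proof. by move=> sf sg; rewrite -deriveD //; apply: sg_diff. Qed.
Lemma D_mul f g x v : sgood f -> sgood g ->
  'D_v (fun p => f p * g p) x = f x * 'D_v g x + g x * 'D_v f x.
Proof. by move=> sf sg; rewrite -deriveM //; apply: sg_diff. Qed.
Lemma D_sum m (Fs : 'I_m -> Cn R n -> R) x v : (forall i, sgood (Fs i)) ->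
  'D_v (fun p => \sum_(i < m) Fs i p) x = \sum_(i < m) 'D_v (Fs i) x.
Proof.
move=> sF.
have -> : (fun p => \sum_(i < m) Fs i p) = \sum_(i < m) Fs i.
  by apply/funext => p; rewrite fct_sumE.
by rewrite derive_sum // => i; apply: sg_diff.
Qed.
Lemma D_cst (c : R) (x v : Cn R n) : 'D_v (fun _ : Cn R n => c) x = 0.
Proof. exact: derive_cst. Qed.
Lemma D_lin f x c u v : sgood f -> 'D_(c *: u + v) f x = c * 'D_u f x + 'D_v f x.
Proof.
move=> sf; have df := (sgood_prop sf).1 x.
by rewrite !deriveE // linearP.
Qed.
Lemma Cn_ext (p q : Cn R n) : (forall j, xc p j = xc q j) -> (forall j, yc p j = yc q j) -> p = q.
Proof.
case: p q => [p1 p2] [q1 q2] hx hy; congr pair; apply/rowP => j.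
- exact: hx j.
- exact: hy j.
Qed.
Lemma sq_isq (y : R) : 0 < y -> ((Num.sqrt y)^-1) ^+ 2 = y^-1.
Proof. by move=> y0; rewrite exprVn sqr_sqrtr // ltW. Qed.
Lemma prod1 (u w : R) : 0 < u -> 0 < w -> (u * w) ^+ 2 = 1 -> u * w = 1.
Proof.
move=> u0 w0; move/eqP; rewrite sqrf_eq1 => /orP [/eqP //|/eqP h].
have : 0 < u * w by apply: mulr_gt0.
by rewrite h ltr0N1.
Qed.
End S.
Arguments vgood_smooth {R n} [F]. Arguments Scl_vgood {R n} [s].
Arguments sgood_prop {R n} [f]. Arguments vgood_prop {R n} [F].

Arguments sgood {R n}. Arguments vgood {R n}.
Arguments sg_cst {R n}. Arguments sg_x {R n}. Arguments sg_y {R n}.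
Arguments sg_add {R n}. Arguments sg_mul {R n}. Arguments sg_sum {R n}. Arguments sg_isq {R n}.
Arguments Scl {R n}. Arguments ex {R n}. Arguments ey {R n}.

Section T.
Variables (R : realType) (n : nat) (a : 'I_n -> R).
Hypothesis apos : forall j, 0 < a j.

Definition N2 (x : Cn R n) j := xc x j * xc x j + yc x j * yc x j.
Definition Qs (x : Cn R n) := pi * \sum_(j < n) N2 x j * (a j)^-1.
Definition Ss (x : Cn R n) := \sum_(j < n) N2 x j * ((a j)^-1 * (a j)^-1).
Definition kG := (1 + \sum_(k < n) a k)^-1.
Definition DG (x : Cn R n) := kG + \sum_(k < n) (pi * ((a k)^-1 * ((a k)^-1 - kG))) * N2 x k.
Definition sG j (x : Cn R n) := (Num.sqrt (a j * DG x))^-1.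
Definition kH := (1 + \sum_(k < n) (a k)^-1)^-1.
Definition EH (x : Cn R n) := kH + \sum_(k < n) (pi * (1 - kH / a k)) * N2 x k.
Definition sH j (x : Cn R n) := (Num.sqrt ((a j)^-1 * EH x))^-1.

Lemma ane j : a j != 0. Proof. by rewrite gt_eqF. Qed.
Lemma N2_ge0 x j : 0 <= N2 x j.
Proof. by rewrite /N2 addr_ge0 // -expr2 sqr_ge0. Qed.
Lemma N2_sg j : sgood (fun x => N2 x j).
Proof. by apply: sg_add; apply: sg_mul; constructor. Qed.

Lemma kG_gt0 : 0 < kG.
Proof. rewrite invr_gt0 ltr_wpDr // sumr_ge0 // => k _; exact: ltW. Qed.
Lemma kG_le k : kG <= (a k)^-1.
Proof.
rewrite /kG lef_pV2 ?posrE ?apos //; last by rewrite ltr_wpDr // sumr_ge0 // => i _; exact: ltW.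
rewrite (bigD1 k) //= addrCA lerDl addr_ge0 // sumr_ge0 // => i _; exact: ltW.
Qed.
Lemma kH_gt0 : 0 < kH.
Proof. rewrite invr_gt0 ltr_wpDr // sumr_ge0 // => k _; rewrite invr_ge0; exact: ltW. Qed.
Lemma kH_le k : kH / a k <= 1.
Proof.
rewrite ler_pdivrMr // mul1r.
rewrite /kH -[a k]invrK lef_pV2 ?posrE ?invr_gt0 ?apos //; last first.
  by rewrite ltr_wpDr // sumr_ge0 // => i _; rewrite invr_ge0; exact: ltW.
rewrite (bigD1 k) //= addrCA lerDl addr_ge0 // sumr_ge0 // => i _; rewrite invr_ge0; exact: ltW.
Qed.

Lemma DG_gt0 x : 0 < DG x.
Proof.
rewrite /DG ltr_wpDr ?kG_gt0 // sumr_ge0 // => k _.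
apply: mulr_ge0; last exact: N2_ge0.
apply: mulr_ge0; first exact: pi_ge0.
apply: mulr_ge0; first by rewrite invr_ge0 ltW.
by rewrite subr_ge0 kG_le.
Qed.
Lemma EH_gt0 x : 0 < EH x.
Proof.
rewrite /EH ltr_wpDr ?kH_gt0 // sumr_ge0 // => k _.
apply: mulr_ge0; last exact: N2_ge0.
apply: mulr_ge0; first exact: pi_ge0.
by rewrite subr_ge0 kH_le.
Qed.
Lemma DG_sg : sgood (@DG).
Proof.
apply: sg_add; first exact: sg_cst.
apply: sg_sum => k; apply: sg_mul; [exact: sg_cst|exact: N2_sg].
Qed.
Lemma EH_sg : sgood (@EH).
Proof.
apply: sg_add; first exact: sg_cst.
apply: sg_sum => k; apply: sg_mul; [exact: sg_cst|exact: N2_sg].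
Qed.
Lemma sG_sg j : sgood (sG j).
Proof.
apply: (@sg_isq _ _ (fun x => a j * DG x)); first by apply: sg_mul; [exact: sg_cst|exact: DG_sg].
by move=> p; rewrite mulr_gt0 ?DG_gt0.
Qed.
Lemma sH_sg j : sgood (sH j).
Proof.
apply: (@sg_isq _ _ (fun x => (a j)^-1 * EH x)); first by apply: sg_mul; [exact: sg_cst|exact: EH_sg].
by move=> p; rewrite mulr_gt0 ?EH_gt0 // invr_gt0.
Qed.
Lemma sG_gt0 j x : 0 < sG j x.
Proof. by rewrite invr_gt0 sqrtr_gt0 mulr_gt0 ?DG_gt0. Qed.
Lemma sH_gt0 j x : 0 < sH j x.
Proof. by rewrite invr_gt0 sqrtr_gt0 mulr_gt0 ?EH_gt0 // invr_gt0. Qed.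
Lemma sG2 j x : sG j x ^+ 2 = (a j)^-1 * (DG x)^-1.
Proof. by rewrite sq_isq ?invfM // mulr_gt0 ?DG_gt0. Qed.
Lemma sH2 j x : sH j x ^+ 2 = a j * (EH x)^-1.
Proof. by rewrite sq_isq ?invfM ?invrK // mulr_gt0 ?EH_gt0 // invr_gt0. Qed.

Lemma ellQ_Qs : ellQ a = Qs.
Proof.
apply/funext => x; rewrite /ellQ /Qs; congr (_ * _); apply: eq_bigr => j _.
Qed.

Lemma DG_S x : Qs x = 1 -> DG x = pi * Ss x.
Proof.
move=> Q1; rewrite /DG.
have -> : \sum_(k < n) pi * ((a k)^-1 * ((a k)^-1 - kG)) * N2 x k =
   pi * Ss x - kG * Qs x.
  rewrite /Ss /Qs [kG * _]mulrA !mulr_sumr -sumrB.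
  by apply: eq_bigr => k _; ring.
by rewrite Q1 mulr1 addrC subrK.
Qed.
Lemma EH_S x : Qs x = 1 -> EH x = pi * \sum_(k < n) N2 x k.
Proof.
move=> Q1; rewrite /EH.
have -> : \sum_(k < n) pi * (1 - kH / a k) * N2 x k =
   pi * \sum_(k < n) N2 x k - kH * Qs x.
  rewrite /Qs [kH * _]mulrA !mulr_sumr -sumrB.
  by apply: eq_bigr => k _; ring.
by rewrite Q1 mulr1 addrC subrK.
Qed.

Lemma N2_Scl s x j : N2 (Scl s x) j = N2 x j * s j x ^+ 2.
Proof. rewrite /N2 Scl_xc Scl_yc; ring. Qed.

Definition Gm := Scl sG.
Definition Hm := Scl sH.

Lemma G_in x : Qs x = 1 -> Qs (Gm x) = 1.
Proof.
move=> Q1.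
have e : Qs (Gm x) = (pi * Ss x) * (DG x)^-1.
  rewrite /Qs /Ss -mulrA mulr_suml; congr (_ * _).
  apply: eq_bigr => j _; rewrite /Gm N2_Scl sG2; ring.
by rewrite e -DG_S // mulfV // gt_eqF // DG_gt0.
Qed.

Lemma H_in x : Qs x = 1 -> Qs (Hm x) = 1.
Proof.
move=> Q1.
have e : Qs (Hm x) = (pi * \sum_(k < n) N2 x k) * (EH x)^-1.
  rewrite /Qs -mulrA mulr_suml; congr (_ * _).
  apply: eq_bigr => j _; rewrite /Hm N2_Scl sH2.
  by field; rewrite ?ane ?gt_eqF ?EH_gt0 //.
by rewrite e -EH_S // mulfV // gt_eqF // EH_gt0.
Qed.

Lemma HG x : Qs x = 1 -> Hm (Gm x) = x.
Proof.
move=> Q1.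
have EG : EH (Gm x) = (DG x)^-1.
  rewrite EH_S ?G_in //.
  rewrite -[RHS]mul1r -{1}Q1 /Qs -mulrA mulr_suml; congr (_ * _).
  apply: eq_bigr => j _; rewrite /Gm N2_Scl sG2; ring.
have h j : sG j x * sH j (Gm x) = 1.
  apply: prod1; rewrite ?sG_gt0 ?sH_gt0 //.
  rewrite exprMn sG2 sH2 EG invrK; field.
  by rewrite ane gt_eqF // DG_gt0.
apply: Cn_ext => j; rewrite /Hm ?Scl_xc ?Scl_yc /Gm ?Scl_xc ?Scl_yc -mulrA h mulr1 //.
Qed.

Lemma GH x : Qs x = 1 -> Gm (Hm x) = x.
Proof.
move=> Q1.
have DH : DG (Hm x) = (EH x)^-1.
  rewrite DG_S ?H_in // /Ss.
  rewrite -[RHS]mul1r -{1}Q1 /Qs -mulrA mulr_suml; congr (_ * _).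
  apply: eq_bigr => j _; rewrite /Hm N2_Scl sH2.
  by field; rewrite ?ane ?gt_eqF ?EH_gt0.
have h j : sH j x * sG j (Hm x) = 1.
  apply: prod1; rewrite ?sG_gt0 ?sH_gt0 //.
  rewrite exprMn sG2 sH2 DH invrK; field.
  by rewrite ane gt_eqF // EH_gt0.
apply: Cn_ext => j; rewrite /Gm ?Scl_xc ?Scl_yc /Hm ?Scl_xc ?Scl_yc -mulrA h mulr1 //.
Qed.

Lemma Q_sg : sgood (ellQ a).
Proof.
rewrite ellQ_Qs; apply: (@sg_mul _ _ (fun _ => pi)); first exact: sg_cst.
apply: sg_sum => j; apply: (@sg_mul _ _ (fun x => N2 x j)); [exact: N2_sg|exact: sg_cst].
Qed.

Lemma dQ p v : 'D_v (ellQ a) p =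
  pi * \sum_(j < n) (2 * (xc p j * xc v j + yc p j * yc v j)) * (a j)^-1.
Proof.
rewrite ellQ_Qs /Qs.
rewrite (@D_mul _ _ (fun _ => pi)); first last.
- apply: sg_sum => j; apply: (@sg_mul _ _ (fun x => N2 x j)); [exact: N2_sg|exact: sg_cst].
- exact: sg_cst.
rewrite D_cst mulr0 addr0; congr (_ * _).
rewrite D_sum; last by move=> j; apply: (@sg_mul _ _ (fun x => N2 x j)); [exact: N2_sg|exact: sg_cst].
apply: eq_bigr => j _.
rewrite (@D_mul _ _ (fun x => N2 x j) (fun _ => (a j)^-1)); [|exact: N2_sg|exact: sg_cst].
rewrite D_cst mulr0 add0r /N2.
rewrite D_add; [|by apply: sg_mul; constructor|by apply: sg_mul; constructor].
rewrite !D_mul; try constructor.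
rewrite !D_x !D_y; ring.
Qed.
End T.
Arguments Gm {R n}. Arguments Hm {R n}. Arguments sG {R n}. Arguments sH {R n}.
Arguments Qs {R n}. Arguments Ss {R n}. Arguments DG {R n}. Arguments EH {R n}.
Arguments N2 {R n}. Arguments kG {R n}. Arguments kH {R n}.
Lemma Jinv (R : realType) (n : nat) (q : Cn R n) : q = Jstd (q.2, - q.1).
Proof. by case: q => q1 q2; rewrite /Jstd /= opprK. Qed.

Lemma alg1 (R : realType) (P o s : R) : P != 0 -> s != 0 ->
  P * (2 * o - o / (2 * P * s) * (4 * P) * s) = 0.
Proof. by move=> Pne sne; field; rewrite Pne sne. Qed.

Theorem mainTheorem8 (R : realType) (n : nat) (a : 'I_n -> R)
  (beta : Cn R n -> Cn R n -> R) :
  (forall j, 0 < a j) ->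
  (forall p, ellBoundary a p -> forall (c : R) u v,
     tangentSigma a p u -> tangentSigma a p v ->
     beta p (c *: u + v) = c * beta p u + beta p v) ->
  (forall p, ellBoundary a p -> forall v, tangentSigma a p v ->
     (beta p v = 0 <->
      exists w, tangentSigma a p w /\ v = Jstd w)) ->
  (forall p, ellBoundary a p -> beta p (Jstd (Zfield a p)) = 1) ->
  exists G : Cn R n -> Cn R n,
    diffeo_on (ellBoundary a) G /\
    forall p, ellBoundary a p -> forall v, tangentSigma a p v ->
      lambda_std (G p) (derive G p v) = beta p v.
Proof.
move=> apos blin bker bZ.
exists (Gm a); split.
  have sGg : forall j, sgood (sG a j) by move=> j; apply: sG_sg.
  have sHg : forall j, sgood (sH a j) by move=> j; apply: sH_sg.
  split; first exact: (vgood_smooth (Scl_vgood sGg)).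
  split; first by move=> p; rewrite /ellBoundary /= !ellQ_Qs; exact: G_in.
  exists (Hm a); split; first exact: (vgood_smooth (Scl_vgood sHg)).
  split; first by move=> p; rewrite /ellBoundary /= !ellQ_Qs; exact: H_in.
  split; first by move=> p; rewrite /ellBoundary /= !ellQ_Qs; exact: HG.
  by move=> p; rewrite /ellBoundary /= !ellQ_Qs; exact: GH.
move=> p pS v vT.
have Q1 : Qs a p = 1 by rewrite -ellQ_Qs.
have aneq j : a j != 0 by rewrite gt_eqF.
rewrite /Gm Scl_lambda; last exact: sG_sg.
set om := \sum_(j < n) (xc p j * yc v j - yc p j * xc v j) * (a j)^-1.
set S := Ss a p.
have Spos : S != 0.
  apply/negP => /eqP S0.
  have h j : N2 p j = 0.
    have nn : forall i : 'I_n, xpredT i -> 0 <= N2 p i * ((a i)^-1 * (a i)^-1).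
      by move=> i _; rewrite mulr_ge0 ?N2_ge0 // mulr_ge0 // invr_ge0 ltW.
    have := psumr_eq0P nn S0 (isT : xpredT j).
    move=> /eqP; rewrite mulf_eq0 => /orP [/eqP //|].
    by rewrite mulf_eq0 invr_eq0 orbb (negbTE (aneq j)).
  move: Q1; rewrite /Qs big1 ?mulr0; last by move=> j _; rewrite h mul0r.
  by move=> /eqP; rewrite eq_sym oner_eq0.
have pine : pi != 0 :> R by rewrite gt_eqF // pi_gt0.
have -> : 2^-1 * \sum_(j < n) sG a j p ^+ 2 * (xc p j * yc v j - yc p j * xc v j)
    = om / (2 * pi * S).
  rewrite (eq_bigr (fun j => (DG a p)^-1 * ((xc p j * yc v j - yc p j * xc v j) * (a j)^-1))); last first.
    by move=> j _; rewrite sG2 //; ring.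
  rewrite -mulr_sumr DG_S // -/S -/om.
  move: (pi : R) pine => P Pne; field.
  by rewrite Pne Spos.
set t := om / (2 * pi * S).
set JZ := Jstd (Zfield a p).
have xJ j : xc JZ j = - (2 * pi / a j * yc p j) by rewrite /JZ /Jstd /xc /= !mxE.
have yJ j : yc JZ j = 2 * pi / a j * xc p j by rewrite /JZ /Jstd /yc /= !mxE.
have JT : tangentSigma a p JZ.
  rewrite /tangentSigma dQ big1 ?mulr0 // => j _; rewrite xJ yJ; ring.
set u := (-t) *: JZ + v.
have uT : tangentSigma a p u.
  rewrite /tangentSigma /u D_lin; last exact: Q_sg.
  by rewrite /tangentSigma in JT vT; rewrite JT vT mulr0 addr0.
have xu j : xc u j = -t * xc JZ j + xc v j by rewrite /u /xc /= !mxE.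
have yu j : yc u j = -t * yc JZ j + yc v j by rewrite /u /yc /= !mxE.
have wT : tangentSigma a p (u.2, - u.1).
  rewrite /tangentSigma dQ.
  have xw j : xc (u.2, - u.1) j = yc u j by [].
  have yw j : yc (u.2, - u.1) j = - xc u j by rewrite /yc /= mxE.
  rewrite (eq_bigr (fun j => 2 * ((xc p j * yc v j - yc p j * xc v j) * (a j)^-1)
       - t * (4 * pi) * (N2 p j * ((a j)^-1 * (a j)^-1)))); last first.
    by move=> j _; rewrite xw yw xu yu xJ yJ /N2; ring.
  rewrite sumrB -!mulr_sumr -/om -/S /t.
  have -> : \sum_(i < n) N2 p i * ((a i)^-1 / a i) = S by [].
  exact: alg1.
have bu : beta p u = 0.
  apply/(bker p pS u uT); exists (u.2, - u.1); split=> //.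
  exact: Jinv.
have := blin p pS (-t) JZ v JT vT.
rewrite -/u bu bZ // mulr1 => /esym/eqP; rewrite addrC subr_eq0 => /eqP ->.
by [].
Qed.
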